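(* Suppose that a long theta with apexes $u$ and $v$ is the underlying graph of some oriented graph $G$ derived from a Burling tree $(T,r,\ell,c)$. Then for every hole $H$ of $G$, exactly one of $u$ and $v$ is the pivot of $H$.
   Context: Graphs are finite, without loops or multiple edges; oriented graphs have no pair of opposite arcs. A hole is an induced cycle of length at least $4$. A theta is a graph made of three internally vertex-disjoint paths of length at least $2$, each linking two vertices $u$ and $v$ (the apexes), with no edges other than those of the three paths. A long theta is a theta in which all three paths have length at least $3$. In a rooted tree $T$ with root $r$, each non-root vertex $v$ has a parent $p(v)$; children, leaves, ancestors and descendants are as usual. A branch is a sequence $v_1\dots v_k$ ($k\ge0$) with $v_i$ the parent of $v_{i+1}$; it starts at $v_1$. A Burling tree is a 4-tuple $(T,r,\ell,c)$: $T$ a rooted tree with root $r$; $\ell$ assigns to each non-leaf vertex $v$ one of its children $\ell(v)$ (the last-born of $v$); $c$ assigns to every vertex $v$ that is neither the root nor a last-born the vertex-set of a (possibly empty) branch starting at $\ell(p(v))$, and $c(v)=\emptyset$ if $v$ is the root or a last-born. The oriented graph fully derived from it has vertex-set $V(T)$ and an arc $uv$ iff $v\in c(u)$; an oriented graph is derived from the Burling tree if it is an induced subgraph of the fully derived one. A hole of an oriented graph means a hole of its underlying graph. If $G$ is derived from $T$ and $H$ is a hole of $G$, then (as established in the paper) $H$ with the inherited orientation has exactly two sources, called its antennas, and exactly two sinks; exactly one of these sinks is adjacent to both antennas and is an ancestor in $T$ of all vertices of $H$ other than the antennas: it is the pivot of $H$. *)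

(* Defs.v *)
From mathcomp Require Import all_boot.
Set Implicit Arguments. Unset Strict Implicit. Unset Printing Implicit Defensive.

(* Rooted tree on a finite vertex type V: root r, parent function p with
   p r = r (a dummy value) and every vertex reaching r by iterating p. *)

Definition ancestor (V : finType) (p : V -> V) (x y : V) : Prop :=
  exists k, iter k p y = x.

Definition is_child (V : finType) (r : V) (p : V -> V) (w v : V) : bool :=
  (w != r) && (p w == v).

Definition is_branch (V : finType) (r : V) (p : V -> V) (s : seq V) : bool :=
  sorted (fun x y => is_child r p y x) s.

Definition is_last_born (V : finType) (r : V) (p : V -> V) (l : V -> V) (v : V) : Prop :=
  v != r /\ l (p v) = v.

Definition is_burling_tree (V : finType) (r : V) (p : V -> V) (l : V -> V)
    (c : V -> {set V}) : Prop :=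
  [/\ p r = r,
      (forall v, ancestor p r v),
      (forall v w, is_child r p w v -> is_child r p (l v) v),
      (forall v, v != r -> ~ is_last_born r p l v ->
         exists s : seq V, [/\ is_branch r p s,
                              (s = [::] \/ exists s', s = l (p v) :: s') &
                              c v = [set x in s]])
    & (forall v, v = r \/ is_last_born r p l v -> c v = set0)].

Definition arc (V : finType) (c : V -> {set V}) (S : {set V}) (x y : V) : bool :=
  [&& x \in S, y \in S & y \in c x].

Definition uadj (V : finType) (c : V -> {set V}) (S : {set V}) (x y : V) : bool :=
  (x != y) && (arc c S x y || arc c S y x).

(* a hole: an induced cycle of length >= 4, given as a cyclic sequence *)
Definition is_hole (V : finType) (S : {set V}) (adj : rel V) (s : seq V) : Prop :=
  [/\ uniq s, 4 <= size s, {subset s <= S} &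
      forall x y, x \in s -> y \in s ->
        adj x y = ((x, y) \in zip s (rot 1 s)) || ((y, x) \in zip s (rot 1 s))].

Definition path_edge (V : finType) (q : seq V) (x y : V) : bool :=
  ((x, y) \in zip q (behead q)) || ((y, x) \in zip q (behead q)).

(* the graph (S, adj) is a long theta with apexes u and v: three internally
   disjoint u-v paths u :: Pi ++ [:: v], each of length >= 3, and no other edges *)
Definition is_long_theta (V : finType) (S : {set V}) (adj : rel V) (u v : V) : Prop :=
  exists P1 P2 P3 : seq V,
    [/\ [&& 2 <= size P1, 2 <= size P2 & 2 <= size P3],
        uniq (u :: v :: P1 ++ P2 ++ P3),
        S = [set x in u :: v :: P1 ++ P2 ++ P3] &
        forall x y, x \in S -> y \in S ->
          adj x y = [|| path_edge (u :: P1 ++ [:: v]) x y,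
                        path_edge (u :: P2 ++ [:: v]) x y |
                        path_edge (u :: P3 ++ [:: v]) x y]].

Definition hole_source (V : finType) (c : V -> {set V}) (S : {set V}) (s : seq V) (x : V) : Prop :=
  x \in s /\ forall y, y \in s -> ~~ arc c S y x.

Definition hole_sink (V : finType) (c : V -> {set V}) (S : {set V}) (s : seq V) (x : V) : Prop :=
  x \in s /\ forall y, y \in s -> ~~ arc c S x y.

Definition is_pivot (V : finType) (p : V -> V) (c : V -> {set V}) (S : {set V})
    (s : seq V) (x : V) : Prop :=
  [/\ hole_sink c S s x,
      (forall a, hole_source c S s a -> uadj c S x a) &
      (forall y, y \in s -> ~ hole_source c S s y -> ancestor p x y)].

(* Main.v *)
From Stdlib Require Import Classical_Prop.
Require Import Defs.
From mathcomp Require Import all_boot zify.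
Set Implicit Arguments. Unset Strict Implicit. Unset Printing Implicit Defensive.

Lemma mem_zipP (T1 T2 : eqType) (s : seq T1) (t : seq T2) a b :
  reflect (exists2 i, i < minn (size s) (size t) & (nth a s i = a /\ nth b t i = b))
          ((a, b) \in zip s t).
Proof.
apply: (iffP (nthP (a, b))) => [[i Hi]|[i Hi [E1 E2]]].
  rewrite nth_zip_cond Hi => -[E1 E2]; exists i; first by rewrite -size_zip.
  by [].
exists i; first by rewrite size_zip.
by rewrite nth_zip_cond size_zip Hi /= E1 E2.
Qed.

Lemma edgeP (T : eqType) (q : seq T) x0 a b :
  (a, b) \in zip q (behead q) <->
  exists i, [/\ i.+1 < size q, nth x0 q i = a & nth x0 q i.+1 = b].
Proof.
split.
  move/mem_zipP => [i Hi [E1 E2]]; exists i.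
  have Hi' : i.+1 < size q by move: Hi; rewrite size_behead; lia.
  split => //.
    by rewrite (set_nth_default a) //; lia.
  by rewrite nth_behead in E2; rewrite (set_nth_default b).
move=> [i [Hi E1 E2]]; apply/mem_zipP; exists i.
  by rewrite size_behead; lia.
split.
  by rewrite (set_nth_default x0) //; lia.
by rewrite nth_behead (set_nth_default x0).
Qed.

Ltac keep_hyp P :=
  lazymatch P with
  | is_true (leq _ _) => idtac
  | @eq nat _ _ => idtac
  | ~ (@eq nat _ _) => idtac
  | is_true (@eq_op _ ?a _) => let _ := constr:(a : nat) in idtac
  | is_true (~~ (@eq_op _ ?a _)) => let _ := constr:(a : nat) in idtac
  | is_true (_ && _) => idtac
  | is_true (_ || _) => idtac
  | _ \/ _ => idtac
  | _ /\ _ => idtac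
  end.

Ltac unify_sizes :=
  repeat match goal with
  | |- context [@size ?A ?x] =>
      match goal with |- context [@size ?B x] =>
        tryif constr_eq A B then fail else change (@size A x) with (@size B x) end
  | H : context [@size ?A ?x] |- context [@size ?B ?x] =>
      tryif constr_eq A B then fail else change (@size A x) with (@size B x) in H
  | H : context [@size ?A ?x] |- _ =>
      match goal with H' : context [@size ?B x] |- _ =>
        tryif constr_eq A B then fail else change (@size A x) with (@size B x) in H end
  end.

Ltac nlia :=
  repeat match goal with H : ?P |- _ => tryif keep_hyp P then fail else clear H end;
  unify_sizes; lia.

Section Tree.
Variables (V : finType) (r : V) (p : V -> V) (l : V -> V) (c : V -> {set V}).
Hypothesis HB : is_burling_tree r p l c.

Lemma HB_pr : p r = r. Proof. by case: HB. Qed.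
Lemma HB_anc v : ancestor p r v. Proof. by case: HB. Qed.
Lemma HB_lb v w : is_child r p w v -> is_child r p (l v) v.
Proof. by case: HB => _ _ H _ _; apply: H. Qed.
Lemma HB_c v : v != r -> ~ is_last_born r p l v ->
  exists s : seq V, [/\ is_branch r p s, (s = [::] \/ exists s', s = l (p v) :: s') &
                              c v = [set x in s]].
Proof. by case: HB => _ _ _ H _; apply: H. Qed.
Lemma HB_c0 v : v = r \/ is_last_born r p l v -> c v = set0.
Proof. by case: HB => _ _ _ _ H; apply: H. Qed.

Lemma ex_root x : exists k, iter k p x == r.
Proof. by case: (HB_anc x) => k Hk; exists k; apply/eqP. Qed.

Definition depth x := ex_minn (ex_root x).

Lemma depth_spec x : iter (depth x) p x = r.
Proof. by rewrite /depth; case: ex_minnP => m /eqP. Qed.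

Lemma depth_min x k : iter k p x = r -> depth x <= k.
Proof. by rewrite /depth; case: ex_minnP => m _ H E; apply: H; apply/eqP. Qed.

Lemma depth_r : depth r = 0.
Proof. by apply/eqP; rewrite -leqn0; apply: depth_min. Qed.

Lemma depth0 x : depth x = 0 -> x = r.
Proof. by move=> H; have := depth_spec x; rewrite H. Qed.

Lemma depth_p x : depth (p x) = (depth x).-1.
Proof.
case: (x =P r) => [->|Hx]; first by rewrite HB_pr depth_r.
case E: (depth x) => [|k]; first by case: Hx; apply: depth0.
apply/eqP; rewrite eqn_leq; apply/andP; split.
  by apply: depth_min; rewrite -iterSr -E depth_spec.
have : depth x <= (depth (p x)).+1 by apply: depth_min; rewrite iterSr depth_spec.
by rewrite E.
Qed.

Lemma depth_iter k x : depth (iter k p x) = depth x - k.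
Proof. elim: k => [|k IH]; first by rewrite subn0. by rewrite iterS depth_p IH subnS. Qed.

Notation anc := (ancestor p).

Lemma anc_refl x : anc x x. Proof. by exists 0. Qed.
Lemma anc_trans x y z : anc x y -> anc y z -> anc x z.
Proof. by move=> [k Hk] [j Hj]; exists (k + j); rewrite iterD Hj. Qed.
Lemma anc_par x : anc (p x) x. Proof. by exists 1. Qed.
Lemma anc_depth x y : anc x y -> depth x <= depth y.
Proof. by move=> [k <-]; rewrite depth_iter leq_subr. Qed.
Lemma anc_eqdepth x y : anc x y -> depth x = depth y -> x = y.
Proof.
move=> [k Hk]; rewrite -Hk depth_iter => E.
case: (depth y =P 0) => [/depth0 Hy|Hy].
  by rewrite Hy iter_fix // HB_pr.
have -> : k = 0 by lia.
by [].
Qed.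
Lemma anc_antisym x y : anc x y -> anc y x -> x = y.
Proof.
move=> H1 H2; apply: anc_eqdepth => //; apply/eqP; rewrite eqn_leq.
by rewrite !anc_depth.
Qed.
Lemma anc_total x y z : anc x z -> anc y z -> anc x y \/ anc y x.
Proof.
move=> [i Hi] [j Hj]; case: (leqP i j) => H.
  by right; exists (j - i); rewrite -Hi -iterD subnK.
by left; exists (i - j); rewrite -Hj -iterD subnK // ltnW.
Qed.
Lemma anc_samedepth x y z : anc x z -> anc y z -> depth x = depth y -> x = y.
Proof.
move=> H1 H2 E; case: (anc_total H1 H2) => H; first exact: anc_eqdepth.
by apply/esym/anc_eqdepth.
Qed.
Lemma anc_strict x y : anc x y -> x <> y -> anc x (p y).
Proof.
move=> [[|k] Hk] Hne; first by case: Hne.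
by exists k; rewrite -iterSr.
Qed.

Lemma depth_child w : w != r -> depth w = (depth (p w)).+1.
Proof.
move=> Hw; rewrite depth_p; case E: (depth w) => [|k] //.
by move/eqP: Hw; case; apply: depth0.
Qed.

Definition crel := fun x y => is_child r p y x.

Lemma branch_facts L s : path crel L s ->
  [/\ (forall y, y \in L :: s -> anc L y),
      (forall y z, y \in L :: s -> anc L z -> anc z y -> z \in L :: s) &
      (forall y z, y \in L :: s -> z \in L :: s -> anc y z \/ anc z y)].
Proof.
elim: s L => [|L' s IH] L /=.
  move=> _; split.
  - by move=> y; rewrite inE => /eqP ->; apply: anc_refl.
  - by move=> y z; rewrite inE => /eqP -> H1 H2; rewrite (anc_antisym H1 H2) inE.
  - by move=> y z; rewrite !inE => /eqP -> /eqP ->; left; apply: anc_refl.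
move=> /andP [/andP [HL'r /eqP HpL'] Hp].
have [I1 I2 I3] := IH L' Hp.
have aLL' : anc L L' by rewrite -HpL'; apply: anc_par.
have dL' : depth L' = (depth L).+1 by rewrite depth_child // HpL'.
have J1 : forall y, y \in [:: L, L' & s] -> anc L y.
  move=> y; rewrite inE => /orP [/eqP ->|Hy]; first exact: anc_refl.
  by apply: anc_trans aLL' (I1 _ Hy).
split => //.
- move=> y z; rewrite inE => /orP [/eqP ->|Hy] H1 H2.
    by rewrite (anc_antisym H1 H2) inE eqxx.
  case: (anc_total H2 (I1 _ Hy)) => H3.
    have H4 := anc_depth H1; have H5 := anc_depth H3.
    case: (depth z =P depth L) => E.
      by rewrite (anc_eqdepth H1 (esym E)) inE eqxx.
    have E2 : depth z = depth L' by lia.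
    by rewrite (anc_eqdepth H3 E2) !inE eqxx orbT.
  by rewrite inE (I2 _ _ Hy H3 H2) orbT.
- move=> y z; rewrite inE => /orP [/eqP ->|Hy].
    by move=> Hz; left; apply: J1.
  rewrite inE => /orP [/eqP ->|Hz].
    by right; apply: J1; rewrite inE Hy orbT.
  exact: I3.
Qed.

Lemma arc_facts x y : y \in c x ->
  [/\ x != r, l (p x) != x, p (l (p x)) = p x, l (p x) != r &
   [/\ anc (l (p x)) y,
       (forall z, anc (l (p x)) z -> anc z y -> z \in c x) &
       (forall z, z \in c x -> anc y z \/ anc z y)]].
Proof.
move=> Hy.
have Hxr : x != r.
  by apply/eqP => Hx; move: Hy; rewrite HB_c0 ?inE //; left.
have Hlb : l (p x) != x.
  by apply/eqP => Hx; move: Hy; rewrite HB_c0 ?inE //; right.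
have /andP [Hlr /eqP Hpl] : is_child r p (l (p x)) (p x).
  by apply: (@HB_lb _ x); rewrite /is_child Hxr eqxx.
split => //.
have [s [Hbr Hs Hcs]] : exists s : seq V, [/\ is_branch r p s,
    (s = [::] \/ exists s', s = l (p x) :: s') & c x = [set x in s]].
  by apply: HB_c => // -[_ /eqP]; rewrite (negbTE Hlb).
move: Hy; rewrite Hcs inE.
case: Hs => [->|[s' Es]] //; rewrite Es => Hy.
have Hp : path crel (l (p x)) s' by move: Hbr; rewrite Es.
have [I1 I2 I3] := branch_facts Hp.

split.
- exact: I1.
- by move=> z H1 H2; rewrite inE; apply: I2 Hy H1 H2.
- by move=> z; rewrite inE => Hz; apply: I3.
Qed.

Lemma arc_depth x y : y \in c x -> depth x <= depth y /\ (depth x = depth y -> y = l (p x)).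
Proof.
move=> Hy; have [Hxr _ Hpl Hlr [H1 _ _]] := arc_facts Hy.
have E : depth (l (p x)) = depth x by rewrite (depth_child Hlr) (depth_child Hxr) Hpl.
split; first by rewrite -E; apply: anc_depth.
by move=> E2; apply/esym/anc_eqdepth => //; rewrite E.
Qed.

Lemma arc_incomp x y : y \in c x -> ~ anc x y /\ ~ anc y x.
Proof.
move=> Hy; have [Hxr Hlb Hpl Hlr [H1 _ _]] := arc_facts Hy.
have E : depth (l (p x)) = depth x by rewrite (depth_child Hlr) (depth_child Hxr) Hpl.
split => H.
  by move/eqP: Hlb; case; apply: (anc_samedepth H1 H).
have [D1 D2] := arc_depth Hy.
have D3 := anc_depth H.
have Ey : y = l (p x) by apply: D2; lia.
move/eqP: Hlb; case; apply: anc_eqdepth; first by rewrite -Ey.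
by [].
Qed.

Lemma arc_irr x : x \notin c x.
Proof. by apply/negP => /arc_incomp [H _]; apply: H; apply: anc_refl. Qed.

Lemma arc_asym x y : y \in c x -> x \notin c y.
Proof.
move=> Hy; apply/negP => Hx.
have [D1 D2] := arc_depth Hy; have [D3 _] := arc_depth Hx.
have Ey : y = l (p x) by apply: D2; lia.
have [_ Hlb _ _ _] := arc_facts Hx.
have [_ _ Hpl _ _] := arc_facts Hy.
by move: Hlb; rewrite Ey Hpl eqxx.
Qed.

Lemma boundary d x y : anc d x -> ~ anc d y -> y \in c x -> x = d.
Proof.
move=> [[|k] Hk] Hn Hy; first by [].
have [_ _ Hpl _ [H1 _ _]] := arc_facts Hy.
case: Hn; apply: anc_trans (_ : anc (p x) y).
  by exists k; rewrite -iterSr.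
by rewrite -Hpl; apply: anc_trans (anc_par _) H1.
Qed.

Lemma boundary2 d x y : anc d x -> ~ anc d y -> x \in c y -> d \in c y.
Proof.
move=> Hd Hn Hx; have [_ _ Hpl _ [H1 H2 _]] := arc_facts Hx.
case: (anc_total Hd H1) => H.
  case: (d =P l (p y)) => E.
    by apply: H2 => //; rewrite E; apply: anc_refl.
  case: Hn; apply: anc_trans (anc_strict H E) _.
  by rewrite Hpl; apply: anc_par.
exact: H2.
Qed.


Variable S : {set V}.
Notation A := (Defs.arc c S).
Notation U := (uadj c S).

Lemma uadj_facts x y : U x y -> [/\ x \in S, y \in S, x != y & (A x y || A y x)].
Proof.
rewrite /uadj /Defs.arc => /andP [Hne /orP [/and3P [H1 H2 H3]|/and3P [H1 H2 H3]]].
  by rewrite H1 H2 H3 Hne.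
by rewrite H1 H2 H3 Hne orbT.
Qed.

Lemma uadj_sym x y : U x y = U y x.
Proof. by rewrite /uadj eq_sym orbC. Qed.

Lemma arc_uadj x y : A x y -> U x y.
Proof.
move=> H; rewrite /uadj H andbT; apply/eqP => E; move: H; rewrite E.
by rewrite /Defs.arc (negbTE (arc_irr y)) !andbF.
Qed.

Lemma arcP x y : A x y -> [/\ x \in S, y \in S & y \in c x].
Proof. by case/and3P. Qed.

Lemma uadj_incomp x y : U x y -> ~ anc x y /\ ~ anc y x.
Proof.
case/uadj_facts => _ _ _ /orP [/arcP [_ _ H]|/arcP [_ _ H]].
  exact: arc_incomp.
by have [H1 H2] := arc_incomp H; split.
Qed.

Lemma arc_asymS x y : A x y -> ~~ A y x.
Proof.
case/arcP => _ _ H; apply/negP => /arcP [_ _ H'].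
by move: (arc_asym H); rewrite H'.
Qed.

Lemma bnd d x y : d \in S -> U x y -> anc d x -> ~ anc d y ->
  x = d \/ (A y x /\ A y d).
Proof.
move=> HdS /uadj_facts [Hx Hy _ /orP [/arcP [_ _ H]|H]] H1 H2.
  by left; apply: (boundary H1 H2 H).
right; split => //; case/arcP: H => _ _ H.
by rewrite /Defs.arc Hy HdS (boundary2 H1 H2 H).
Qed.

Lemma modS_small m k : m < k -> m.+1 %% k = (if m.+1 == k then 0 else m.+1).
Proof. move=> H; case: eqP => [->|Hne]; first by rewrite modnn. rewrite modn_small //; lia. Qed.

Definition cyc k m m' := (m' == m.+1 %% k) || (m == m'.+1 %% k).

Lemma cycE k m m' : m < k -> m' < k ->
  cyc k m m' = [|| m' == m.+1, m == m'.+1, (m' == 0) && (m.+1 == k) | (m == 0) && (m'.+1 == k)].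
Proof.
move=> Hm Hm'; rewrite /cyc (modS_small Hm) (modS_small Hm').
case: (m.+1 =P k) => E1; case: (m'.+1 =P k) => E2; lia.
Qed.

Lemma nth_rot1 (T : eqType) (s : seq T) x0 i : i < size s ->
  nth x0 (rot 1 s) i = nth x0 s (i.+1 %% size s).
Proof.
case: s => [|x t] //= Hi; rewrite rot1_cons nth_rcons.
case: ltnP => H.
  by rewrite modn_small.
have -> : i = size t by lia.
by rewrite eqxx modnn.
Qed.

Lemma zrot (T : eqType) (s : seq T) x0 i j : uniq s -> i < size s -> j < size s ->
  ((nth x0 s i, nth x0 s j) \in zip s (rot 1 s)) = (j == i.+1 %% size s).
Proof.
move=> Hu Hi Hj; have Hk : 0 < size s by lia.
apply/idP/idP.
  case/mem_zipP => m; rewrite size_rot minnn => Hm [E1 E2].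
  rewrite (set_nth_default x0) // in E1.
  rewrite (set_nth_default x0) ?size_rot // nth_rot1 // in E2.
  move/eqP: E1; rewrite nth_uniq // => /eqP Em; subst m.
  move/eqP: E2; rewrite nth_uniq // ?ltn_pmod // => /eqP ->.
  by [].
move/eqP => ->; apply/mem_zipP; exists i; first by rewrite size_rot minnn.
split; first by rewrite (set_nth_default x0).
by rewrite (set_nth_default x0) ?size_rot // nth_rot1 // (set_nth_default x0) ?ltn_pmod.
Qed.

Lemma hole_adj s x0 i j : is_hole S U s -> i < size s -> j < size s ->
  U (nth x0 s i) (nth x0 s j) = cyc (size s) i j.
Proof.
case=> Hu Hk Hsub Hadj Hi Hj.
by rewrite Hadj ?mem_nth // !zrot.
Qed.

Lemma cyc_shift i0 m m' k : 0 < k -> m' < k ->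
  ((i0 + m') %% k == ((i0 + m) %% k).+1 %% k) = (m' == m.+1 %% k).
Proof.
move=> Hk Hm'; rewrite -[((i0 + m) %% k).+1]addn1 modnDml -addnA addn1 eqn_modDl.
by rewrite (modn_small Hm').
Qed.

Definition gf (s : seq V) d m := nth d s ((index d s + m) %% size s).

Lemma gf_props s d : is_hole S U s -> d \in s ->
  [/\ gf s d 0 = d, (forall m, gf s d m \in s),
      (forall y, y \in s -> exists2 m, m < size s & y = gf s d m),
      (forall m m', m < size s -> m' < size s -> gf s d m = gf s d m' -> m = m') &
      (forall m m', m < size s -> m' < size s -> U (gf s d m) (gf s d m') = cyc (size s) m m')].
Proof.
move=> Hh Hd; have [Hu Hk _ _] := Hh.
have Hk0 : 0 < size s by lia.
have Hi0 : index d s < size s by rewrite index_mem.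
split.
- by rewrite /gf addn0 modn_small // nth_index.
- by move=> m; rewrite /gf mem_nth // ltn_pmod.
- move=> y Hy; have Hiy : index y s < size s by rewrite index_mem.
  exists ((index y s + (size s - index d s)) %% size s); first by rewrite ltn_pmod.
  rewrite /gf modnDmr.
  have -> : index d s + (index y s + (size s - index d s)) = index y s + size s by lia.
  by rewrite modnDr modn_small // nth_index.
- move=> m m' Hm Hm' /eqP; rewrite /gf nth_uniq ?ltn_pmod // eqn_modDl.
  by rewrite !modn_small // => /eqP.
- move=> m m' Hm Hm'; rewrite /gf hole_adj ?ltn_pmod //.
  by rewrite /cyc !cyc_shift.
Qed.


Definition cycR k a b := b = a.+1 \/ a = b.+1 \/ (b = 0 /\ a.+1 = k) \/ (a = 0 /\ b.+1 = k).

Lemma cycP k a b : a < k -> b < k -> cyc k a b -> cycR k a b.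
Proof. by move=> Ha Hb; rewrite cycE // /cycR; lia. Qed.
Lemma cycI k a b : a < k -> b < k -> cycR k a b -> cyc k a b.
Proof. by move=> Ha Hb; rewrite cycE // /cycR; lia. Qed.

Lemma pivot_struct s d w : is_hole S U s -> d \in s -> w \in s -> w != d -> anc d w ->
  [/\ [/\ A (gf s d 1) d, A (gf s d (size s - 1)) d, A (gf s d 1) (gf s d 2),
         A (gf s d (size s - 1)) (gf s d (size s - 2)) & gf s d 1 != gf s d (size s - 1)],
      [/\ anc d (gf s d 2), anc d (gf s d (size s - 2)), gf s d 2 != d & gf s d (size s - 2) != d],
      hole_sink c S s d,
      hole_source c S s (gf s d 1) /\ hole_source c S s (gf s d (size s - 1)) &
      (forall y, y \in s -> y != gf s d 1 -> y != gf s d (size s - 1) -> anc d y) /\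
      (forall y, y \in s -> U d y -> y = gf s d 1 \/ y = gf s d (size s - 1))].
Proof.
move=> Hh Hd Hw Hne Hdw.
have [Hu Hk Hsub _] := Hh.
have HdS : d \in S by apply: Hsub.
have [E0 Gin Gall Ginj Ug] := gf_props Hh Hd.
set g := gf s d in E0 Gin Gall Ginj Ug *.
set k := size s in Hk Gall Ginj Ug *.
clearbody g k.
have UgP : forall a b, a < k -> b < k -> U (g a) (g b) -> cycR k a b.
  by move=> a b Ha Hb; rewrite Ug //; apply: cycP.
have UgI : forall a b, a < k -> b < k -> cycR k a b -> U (g a) (g b).
  by move=> a b Ha Hb H; rewrite Ug //; apply: cycI.
clear Ug.
have Gne : forall m, m < k -> 0 < m -> g m != d.
  move=> m Hm Hm0; apply/eqP; rewrite -E0 => /Ginj; nlia.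
have U01 : U (g 0) (g 1) by apply: UgI; rewrite /cycR; nlia.
have U0k : U (g 0) (g (k - 1)) by apply: UgI; rewrite /cycR; nlia.
have [N1 _] := uadj_incomp U01; rewrite E0 in N1.
have [Nk _] := uadj_incomp U0k; rewrite E0 in Nk.
have step : forall m m', m < k -> m' < k -> 0 < m -> cycR k m m' -> 1 < m' < k - 1 ->
    anc d (g m) -> anc d (g m').
  move=> m m' Hm Hm' Hm0 Hc Hr Ha.
  case: (classic (anc d (g m'))) => // Hn.
  have Uv : U (g m) (g m') by apply: UgI.
  case: (bnd HdS Uv Ha Hn) => [Eg|[_ H2]].
    by move: (Gne m Hm Hm0); rewrite Eg eqxx.
  have := arc_uadj H2; rewrite uadj_sym -E0 => /UgP H.
  have {H} : cycR k 0 m' by apply: H; nlia.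
  rewrite /cycR; nlia.
case: (Gall w Hw) => m0 Hm0 Ew.
have Hm0r : 1 < m0 < k - 1.
  have H0 : m0 <> 0 by move=> E; move: Hne; rewrite Ew E E0 eqxx.
  have H1 : m0 <> 1 by move=> E; apply: N1; rewrite -E -Ew.
  have H2 : m0 <> k - 1 by move=> E; apply: Nk; rewrite -E -Ew.
  nlia.
have fwd : forall n, m0 + n <= k - 2 -> anc d (g (m0 + n)).
  elim=> [|n IH] Hn; first by rewrite addn0 -Ew.
  rewrite addnS; apply: (step (m0 + n)); try nlia.
    by rewrite /cycR; nlia.
  by apply: IH; nlia.
have bwd : forall n, n <= m0 - 2 -> anc d (g (m0 - n)).
  elim=> [|n IH] Hn; first by rewrite subn0 -Ew.
  rewrite subnS; apply: (step (m0 - n)); try nlia.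
    by rewrite /cycR; nlia.
  by apply: IH; nlia.
have All : forall m, 1 < m < k - 1 -> anc d (g m).
  move=> m Hm; case: (leqP m0 m) => H.
    by have := fwd (m - m0); rewrite subnKC //; apply; nlia.
  by have := bwd (m0 - m); rewrite subKn ?(ltnW H) //; apply; nlia.
clear fwd bwd Hm0r Hm0 Ew step.
have A2 : anc d (g 2) by apply: All; nlia.
have Ak : anc d (g (k - 2)) by apply: All; nlia.
have [Aa Ad] : A (g 1) (g 2) /\ A (g 1) d.
  have Uv : U (g 2) (g 1) by apply: UgI; rewrite /cycR; nlia.
  case: (bnd HdS Uv A2 N1) => // Eg.
  by move: (Gne 2 ltac:(nlia) ltac:(nlia)); rewrite Eg eqxx.
have [Ab Bd] : A (g (k - 1)) (g (k - 2)) /\ A (g (k - 1)) d.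
  have Uv : U (g (k - 2)) (g (k - 1)) by apply: UgI; rewrite /cycR; nlia.
  case: (bnd HdS Uv Ak Nk) => // Eg.
  by move: (Gne (k - 2) ltac:(nlia) ltac:(nlia)); rewrite Eg eqxx.
have Gdist : forall m m', m < k -> m' < k -> m <> m' -> g m != g m'.
  by move=> m m' Hm Hm' Hmm; apply/eqP => /Ginj; auto.
have Nb0 : forall y m, y \in s -> U d y -> y = g m -> m < k -> m = 1 \/ m = k - 1.
  move=> y m Hy Hdy Ey Hm.
  have : cycR k 0 m by apply: UgP; [nlia|nlia|rewrite E0 -Ey].
  rewrite /cycR; nlia.
split.
- split; [exact: Ad|exact: Bd|exact: Aa|exact: Ab|apply: Gdist; nlia].
- split; [exact: A2|exact: Ak|apply: Gne; nlia|apply: Gne; nlia].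
- split; first exact: Hd.
  move=> y Hy; apply/negP => Hdy.
  case: (Gall y Hy) => m Hm Ey.
  have [Em|Em] := Nb0 y m Hy (arc_uadj Hdy) Ey Hm.
    by move: Hdy (arc_asymS Ad); rewrite Ey Em => ->.
  by move: Hdy (arc_asymS Bd); rewrite Ey Em => ->.
- split; split; [exact: Gin| |exact: Gin|].
    move=> y Hy; apply/negP => Hya.
    case: (Gall y Hy) => m Hm Ey.
    have : cycR k 1 m.
      by apply: UgP; [nlia|nlia|rewrite -Ey uadj_sym; apply: arc_uadj].
    rewrite /cycR => Hc; have [Em|Em] : m = 0 \/ m = 2 by nlia.
      by move: Hya (arc_asymS Ad); rewrite Ey Em E0 => ->.
    by move: Hya (arc_asymS Aa); rewrite Ey Em => ->.
  move=> y Hy; apply/negP => Hya.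
  case: (Gall y Hy) => m Hm Ey.
  have : cycR k (k - 1) m.
    by apply: UgP; [nlia|nlia|rewrite -Ey uadj_sym; apply: arc_uadj].
  rewrite /cycR => Hc; have [Em|Em] : m = 0 \/ m = k - 2 by nlia.
    by move: Hya (arc_asymS Bd); rewrite Ey Em E0 => ->.
  by move: Hya (arc_asymS Ab); rewrite Ey Em => ->.
split.
- move=> y Hy Hy1 Hyk; case: (Gall y Hy) => m Hm Ey.
  case: (m =P 0) => [Em|Em]; first by rewrite Ey Em E0; apply: anc_refl.
  rewrite Ey; apply: All.
  have H1 : m <> 1 by move=> E; move: Hy1; rewrite Ey E eqxx.
  have H2 : m <> k - 1 by move=> E; move: Hyk; rewrite Ey E eqxx.
  nlia.
- move=> y Hy Hdy; case: (Gall y Hy) => m Hm Ey.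
  have [Em|Em] := Nb0 y m Hy Hdy Ey Hm.
    by left; rewrite Ey Em.
  by right; rewrite Ey Em.
Qed.


Lemma in_min x y : x \in c y -> depth x <= depth y ->
  [/\ c x = set0, depth y = depth x & x = l (p y)].
Proof.
move=> Hx Hd; have [D1 D2] := arc_depth Hx.
have E : depth y = depth x by apply/eqP; rewrite eqn_leq D1 Hd.
have Ex := D2 E.
have [_ _ Hpl Hlr _] := arc_facts Hx.
split => //; apply: HB_c0; right; split; first by rewrite Ex.
by rewrite {1}Ex Hpl.
Qed.

Lemma exists_pivot s : is_hole S U s ->
  exists d w, [/\ d \in s, w \in s, w != d & anc d w].
Proof.
move=> Hh; have [Hu Hk Hsub _] := Hh.
have [y0 Hy0] : exists y0, y0 \in s.
  exists (nth r s 0); apply: mem_nth.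
  exact: leq_trans _ Hk.
have ex : exists n, has (fun y => depth y == n) s.
  by exists (depth y0); apply/hasP; exists y0.
case: (ex_minnP ex) => n /hasP [x Hx /eqP Hxn] Hmin.
have Hxmin : forall y, y \in s -> depth x <= depth y.
  by move=> y Hy; rewrite Hxn; apply: Hmin; apply/hasP; exists y.
have [E0 Gin Gall Ginj Ug] := gf_props Hh Hx.
set g := gf s x in E0 Gin Gall Ginj Ug *.
set k := size s in Hk Gall Ginj Ug *.
clearbody g k.
have UgI : forall a b, a < k -> b < k -> cycR k a b -> U (g a) (g b).
  by move=> a b Ha Hb H; rewrite Ug //; apply: cycI.
have U01 : U (g 0) (g 1) by apply: UgI; rewrite /cycR; nlia.
have U0k : U (g 0) (g (k - 1)) by apply: UgI; rewrite /cycR; nlia.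
have U12 : U (g 1) (g 2) by apply: UgI; rewrite /cycR; nlia.
rewrite E0 in U01 U0k.
have [_ _ _ H01] := uadj_facts U01.
have [_ _ _ H0k] := uadj_facts U0k.
have [_ _ _ H12] := uadj_facts U12.
case A1x: (A (g 1) x).
  have [_ _ Hx1] := arcP A1x.
  have [Hcx Edx Exl] := in_min Hx1 (Hxmin _ (Gin 1)).
  case Az1: (A (g 2) (g 1)).
    have [_ _ H21] := arcP Az1.
    have Hd21 : depth (g 1) <= depth (g 2) by rewrite Edx; apply: Hxmin; apply: Gin.
    have [Hc1 _ _] := in_min H21 Hd21.
    by move: Hx1; rewrite Hc1 inE.
  rewrite Az1 orbF in H12.
  have [_ _ H12'] := arcP H12.
  have [_ _ _ _ [Ha _ _]] := arc_facts H12'.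
  exists x, (g 2); split => //; last by rewrite Exl.
  by apply/eqP; rewrite -E0 => /Ginj; nlia.
rewrite A1x orbF in H01.
have [_ _ Hx1] := arcP H01.
case Akx: (A (g (k - 1)) x).
  have [_ _ Hxk] := arcP Akx.
  have [Hcx _ _] := in_min Hxk (Hxmin _ (Gin _)).
  by move: Hx1; rewrite Hcx inE.
rewrite Akx orbF in H0k.
have [_ _ Hxk] := arcP H0k.
have [_ _ _ _ [_ _ Hcmp]] := arc_facts Hx1.
have Hne : g (k - 1) != g 1 by apply/eqP => /Ginj; nlia.
case: (Hcmp _ Hxk) => H.
  by exists (g 1), (g (k - 1)).
by exists (g (k - 1)), (g 1); split => //; rewrite eq_sym.
Qed.

Lemma sources_pivot s d w z : is_hole S U s -> d \in s -> w \in s -> w != d -> anc d w ->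
  hole_source c S s z -> z = gf s d 1 \/ z = gf s d (size s - 1).
Proof.
move=> Hh Hd Hw Hne Hdw [Hz Hsz].
have [[Ad Bd _ _ Hab] _ _ [Sa Sb] [Hall Hnb]] := pivot_struct Hh Hd Hw Hne Hdw.
case: (classic (z = gf s d 1 \/ z = gf s d (size s - 1))) => // Hn.
exfalso.
have claim : forall t t', t \in s -> t' \in s -> t' != t -> anc t t' -> A z t -> False.
  move=> t t' Ht Ht' Htt Hat Hzt.
  have [[At Bt _ _ _] _ _ [Sat Sbt] [Hallt _]] := pivot_struct Hh Ht Ht' Htt Hat.
  have Ha_in : gf s d 1 \in s by have [_ G _ _ _] := gf_props Hh Hd; apply: G.
  have Hb_in : gf s d (size s - 1) \in s by have [_ G _ _ _] := gf_props Hh Hd; apply: G.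
  have H1 : anc d t.
    apply: Hall => //; apply/eqP => E.
      by move: (Sa.2 z Hz); rewrite -E Hzt.
    by move: (Sb.2 z Hz); rewrite -E Hzt.
  have H2 : anc t d.
    apply: Hallt => //; apply/eqP => E.
      by move: (Sat.2 _ Ha_in); rewrite -E Ad.
    by move: (Sbt.2 _ Ha_in); rewrite -E Ad.
  have Etd := anc_antisym H1 H2; subst t.
  apply: Hn; apply: Hnb => //.
  by rewrite uadj_sym; apply: arc_uadj.
have [E0 Gin Gall Ginj Ug] := gf_props Hh Hz.
have [_ Hk _ _] := Hh.
have U01 : U (gf s z 0) (gf s z 1) by rewrite Ug ?cycI // /cycR; nlia.
have U0k : U (gf s z 0) (gf s z (size s - 1)) by rewrite Ug ?cycI // /cycR; nlia.
rewrite E0 in U01 U0k.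
have [_ _ _ H1] := uadj_facts U01.
have [_ _ _ H2] := uadj_facts U0k.
rewrite (negbTE (Hsz _ (Gin _))) orbF in H1.
rewrite (negbTE (Hsz _ (Gin _))) orbF in H2.
have [_ _ Hc1] := arcP H1.
have [_ _ Hc2] := arcP H2.
have [_ _ _ _ [_ _ Hcmp]] := arc_facts Hc1.
have Hne12 : gf s z (size s - 1) != gf s z 1 by apply/eqP => /Ginj; nlia.
case: (Hcmp _ Hc2) => H.
  exact: (claim _ _ (Gin 1) (Gin _) Hne12 H H1).
by apply: (claim _ _ (Gin _) (Gin 1) _ H H2); rewrite eq_sym.
Qed.


Section Seqs.
Variable T : finType.
Implicit Types (q s t : seq T) (x y u v w : T).

Lemma pe_mem q x y : path_edge q x y -> x \in q /\ y \in q.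
Proof.
case/orP => /(edgeP q x) [i [Hi E1 E2]]; rewrite -E1 -E2; split; apply: mem_nth; nlia.
Qed.

Lemma E_rev q x y : (x, y) \in zip (rev q) (behead (rev q)) -> (y, x) \in zip q (behead q).
Proof.
move/(edgeP _ x) => [i [Hi E1 E2]]; rewrite size_rev in Hi.
apply/(edgeP _ x); exists (size q - i.+2); split; first by nlia.
  rewrite nth_rev in E2; last by nlia.
  by apply: etrans _ E2; congr nth; nlia.
rewrite nth_rev in E1; last by nlia.
by apply: etrans _ E1; congr nth; nlia.
Qed.

Lemma pe_rev q x y : path_edge (rev q) x y = path_edge q x y.
Proof.
rewrite /path_edge; apply/idP/idP => /orP [H|H].
- by rewrite (E_rev H) orbT.
- by rewrite (E_rev H).
- by rewrite -(revK q) in H; rewrite (E_rev H) orbT.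
- by rewrite -(revK q) in H; rewrite (E_rev H).
Qed.

Lemma nth_inP u P v j : 0 < j <= size P -> nth u (u :: P ++ [:: v]) j \in P.
Proof.
case: j => [|j] // /andP [_ Hj] /=.
by rewrite nth_cat Hj mem_nth.
Qed.

Lemma pe_in_P u P v x y : P != [::] -> path_edge (u :: P ++ [:: v]) x y -> x \in P \/ y \in P.
Proof.
move=> HP; have HP0 : 0 < size P by case: P HP.
have Hsz : size (u :: P ++ [:: v]) = (size P).+2 by rewrite /= size_cat addn1.
case/orP => /(edgeP _ u) [i [Hi E1 E2]]; rewrite Hsz in Hi.
- case: i Hi E1 E2 => [|i] Hi E1 E2.
    by right; rewrite -E2; apply: nth_inP; nlia.
  by left; rewrite -E1; apply: nth_inP; nlia.
- case: i Hi E1 E2 => [|i] Hi E1 E2.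
    by left; rewrite -E2; apply: nth_inP; nlia.
  by right; rewrite -E1; apply: nth_inP; nlia.
Qed.

Lemma pe_uv u P v w : uniq (u :: P ++ [:: v]) -> 2 <= size P ->
  path_edge (u :: P ++ [:: v]) w u -> path_edge (u :: P ++ [:: v]) w v -> False.
Proof.
set q := u :: P ++ [:: v] => Hu HP.
have Hsz : size q = (size P).+2 by rewrite /q /= size_cat addn1.
have Iu : nth u q 0 = u by [].
have Iv : nth u q (size P).+1 = v by rewrite /q /= nth_cat ltnn subnn.
have inj : forall i j, i < size q -> j < size q -> nth u q i = nth u q j -> i = j.
  by move=> i j Hi Hj /eqP; rewrite nth_uniq // => /eqP.
have W1 : path_edge q w u -> w = nth u q 1.
  case/orP => /(edgeP _ u) [i [Hi E1 E2]].
    by rewrite -Iu in E2; have := inj i.+1 0 Hi ltac:(nlia) E2.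
  rewrite -Iu in E1; have Ei := inj i 0 ltac:(nlia) ltac:(nlia) E1.
  by rewrite -E2 Ei.
have W2 : path_edge q w v -> w = nth u q (size P).
  case/orP => /(edgeP _ u) [i [Hi E1 E2]].
    rewrite -Iv in E2; have Ei := inj i.+1 (size P).+1 Hi ltac:(nlia) E2.
    by rewrite -E1; congr nth; nlia.
  rewrite -Iv in E1; have := inj i (size P).+1 ltac:(nlia) ltac:(nlia) E1; nlia.
move=> H1 H2; have E1 := W1 H1; have E2 := W2 H2.
rewrite E1 in E2; have := inj 1 (size P) ltac:(nlia) ltac:(nlia) E2; nlia.
Qed.

Lemma zip_trunc s t x : size s = size t -> zip (rcons s x) t = zip s t.
Proof. by move=> H; rewrite -cats1 -[t in LHS]cats0 zip_cat // cats0. Qed.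

Lemma zip_cyc u v P1 P2 :
  zip (u :: P1 ++ v :: rev P2) (rot 1 (u :: P1 ++ v :: rev P2)) =
  zip (u :: P1 ++ [:: v]) (behead (u :: P1 ++ [:: v])) ++
  zip (rev (u :: P2 ++ [:: v])) (behead (rev (u :: P2 ++ [:: v]))).
Proof.
have -> : rev (u :: P2 ++ [:: v]) = v :: rcons (rev P2) u.
  by rewrite rev_cons rev_cat.
rewrite rot1_cons.
have -> : rcons (P1 ++ v :: rev P2) u = rcons P1 v ++ rcons (rev P2) u.
  by rewrite rcons_cat cat_rcons.
have -> : u :: P1 ++ v :: rev P2 = (u :: P1) ++ (v :: rev P2) by [].
rewrite zip_cat ?size_rcons //=.
congr (_ ++ _).
  by rewrite cats1 -rcons_cons zip_trunc // size_rcons.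
by rewrite -rcons_cons zip_trunc // size_rcons.
Qed.

Lemma uniq_notin (a b x : T) X Y : uniq (a :: b :: X ++ Y) -> x \in X -> x \in a :: b :: Y = false.
Proof.
move=> Hu Hx; have : uniq (X ++ [:: a, b & Y]).
  by rewrite -(uniq_catCA [:: a; b]).
rewrite cat_uniq => /and3P [_ /hasPn H _].
apply/negbTE/negP => Hx'; by move: (H x Hx'); rewrite /= Hx.
Qed.

End Seqs.

Variables u v : V.

Definition tdata (P1 P2 P3 : seq V) :=
  [/\ [&& 2 <= size P1, 2 <= size P2 & 2 <= size P3],
      uniq (u :: v :: P1 ++ P2 ++ P3),
      S = [set x in u :: v :: P1 ++ P2 ++ P3] &
      forall x y, x \in S -> y \in S ->
        U x y = [|| path_edge (u :: P1 ++ [:: v]) x y,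
                    path_edge (u :: P2 ++ [:: v]) x y |
                    path_edge (u :: P3 ++ [:: v]) x y]].

Lemma tdata_213 P1 P2 P3 : tdata P1 P2 P3 -> tdata P2 P1 P3.
Proof.
case=> /and3P [h1 h2 h3] Hu HS Hadj; split.
- by rewrite h1 h2 h3.
- have Hp : perm_eq (u :: v :: P1 ++ P2 ++ P3) (u :: v :: P2 ++ P1 ++ P3).
    by rewrite !perm_cons perm_catCA.
  by rewrite -(perm_uniq Hp).
- rewrite HS; apply/setP => x; rewrite !inE !mem_cat.
  by case: (x \in P1); case: (x \in P2); rewrite ?orbT.
- by move=> x y Hx Hy; rewrite Hadj // orbCA.
Qed.

Lemma tdata_132 P1 P2 P3 : tdata P1 P2 P3 -> tdata P1 P3 P2.
Proof.
case=> /and3P [h1 h2 h3] Hu HS Hadj; split.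
- by rewrite h1 h2 h3.
- have Hp : perm_eq (u :: v :: P1 ++ P2 ++ P3) (u :: v :: P1 ++ P3 ++ P2).
    by rewrite !perm_cons perm_cat2l perm_catC.
  by rewrite -(perm_uniq Hp).
- rewrite HS; apply/setP => x; rewrite !inE !mem_cat.
  by case: (x \in P2); case: (x \in P3); rewrite ?orbT.
- by move=> x y Hx Hy; rewrite Hadj //; congr (_ || _); rewrite orbC.
Qed.

Lemma td_mem P1 P2 P3 x : tdata P1 P2 P3 -> (x \in S) = (x \in u :: v :: P1 ++ P2 ++ P3).
Proof. by case=> _ _ -> _; rewrite inE. Qed.

Lemma td_uniq1 P1 P2 P3 : tdata P1 P2 P3 -> uniq (u :: P1 ++ [:: v]).
Proof.
case=> _ Hu _ _.
have H : uniq ((u :: v :: P1) ++ P2 ++ P3) := Hu.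
move: H; rewrite cat_uniq => /andP [H _].
have Hp : perm_eq (u :: P1 ++ [:: v]) (u :: v :: P1) by rewrite perm_cons cats1 perm_rcons.
by rewrite (perm_uniq Hp).
Qed.

Lemma td_disj1 P1 P2 P3 x : tdata P1 P2 P3 -> x \in P1 -> (x \in u :: v :: P2 ++ P3) = false.
Proof. by case=> _ Hu _ _ Hx; apply: uniq_notin Hu Hx. Qed.

Lemma pe1 P1 P2 P3 z y : tdata P1 P2 P3 -> z \in P1 -> U z y -> path_edge (u :: P1 ++ [:: v]) z y.
Proof.
move=> Ht Hz Hzy; have [Hz' Hy' _ _] := uadj_facts Hzy.
have D := td_disj1 Ht Hz.
have [_ _ _ Hadj] := Ht; move: Hzy; rewrite Hadj // => /or3P [H|H|H] //.
- case: (pe_mem H) => Hz2 _; move: D Hz2; rewrite !inE !mem_cat !inE.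
  by case: (z == u); case: (z == v); case: (z \in P2).
- case: (pe_mem H) => Hz2 _; move: D Hz2; rewrite !inE !mem_cat !inE.
  by case: (z == u); case: (z == v); case: (z \in P3); rewrite ?orbT.
Qed.

Lemma nbr1 P1 P2 P3 z y : tdata P1 P2 P3 -> z \in P1 -> U z y -> y \in u :: P1 ++ [:: v].
Proof. by move=> Ht Hz Hzy; case: (pe_mem (pe1 Ht Hz Hzy)). Qed.

Lemma noc1 P1 P2 P3 w : tdata P1 P2 P3 -> w \in P1 -> U w u -> U w v -> False.
Proof.
move=> Ht Hw H1 H2; have [/and3P [h1 _ _] _ _ _] := Ht.
exact: (pe_uv (td_uniq1 Ht) h1 (pe1 Ht Hw H1) (pe1 Ht Hw H2)).
Qed.

Lemma tdata_312 P1 P2 P3 : tdata P1 P2 P3 -> tdata P3 P1 P2.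
Proof. by move=> Ht; apply: tdata_213; apply: tdata_132. Qed.

Lemma noc P1 P2 P3 w : tdata P1 P2 P3 -> U w u -> U w v -> False.
Proof.
move=> Ht H1 H2; have [Hw _ Hwu _] := uadj_facts H1; have [_ _ Hwv _] := uadj_facts H2.
move: Hw; rewrite (td_mem _ Ht) !inE !mem_cat (negbTE Hwu) (negbTE Hwv) /=.
case/or3P => Hw.
- exact: (noc1 Ht Hw H1 H2).
- exact: (noc1 (tdata_213 Ht) Hw H1 H2).
- exact: (noc1 (tdata_312 Ht) Hw H1 H2).
Qed.

Lemma memC x P Q : (x \in u :: P ++ v :: rev Q) = [|| x == u, x \in P, x == v | x \in Q].
Proof. by rewrite !inE mem_cat inE mem_rev. Qed.

Lemma cycle_hole P1 P2 P3 : tdata P1 P2 P3 -> is_hole S U (u :: P1 ++ v :: rev P2).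
Proof.
move=> Ht; have [/and3P [h1 h2 h3] Hu HS Hadj] := Ht.
split.
- have H : uniq ((u :: v :: P1 ++ P2) ++ P3) by rewrite /= -catA.
  move: H; rewrite cat_uniq => /andP [H _].
  have Hp : perm_eq (u :: P1 ++ v :: rev P2) (u :: v :: P1 ++ P2).
    rewrite perm_cons -cat1s perm_catCA /= perm_cons perm_cat2l.
    by rewrite perm_rev.
  by rewrite (perm_uniq Hp).
- by rewrite /= size_cat /= size_rev; nlia.
- move=> x; rewrite memC (td_mem _ Ht) !inE !mem_cat.
  by case: (x == u); case: (x == v); case: (x \in P1); case: (x \in P2); rewrite ?orbT.
- move=> x y Hx Hy.
  have HxS : x \in S by rewrite (td_mem _ Ht) !inE !mem_cat; move: Hx; rewrite memC;
    case: (x == u); case: (x == v); case: (x \in P1); case: (x \in P2); rewrite ?orbT.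
  have HyS : y \in S by rewrite (td_mem _ Ht) !inE !mem_cat; move: Hy; rewrite memC;
    case: (y == u); case: (y == v); case: (y \in P1); case: (y \in P2); rewrite ?orbT.
  have Ht3 := tdata_312 Ht.
  have F : path_edge (u :: P3 ++ [:: v]) x y = false.
    apply/negbTE/negP => H.
    have HP3 : P3 != [::] by case: (P3) h3.
    case: (pe_in_P HP3 H) => Hz.
      move: (td_disj1 Ht3 Hz) Hx; rewrite memC !inE !mem_cat => /negbT H1 H2; apply: (negP H1).
      by move: H2; case: (x == u); case: (x == v); case: (x \in P1); case: (x \in P2); rewrite ?orbT.
    move: (td_disj1 Ht3 Hz) Hy; rewrite memC !inE !mem_cat => /negbT H1 H2; apply: (negP H1).
    by move: H2; case: (y == u); case: (y == v); case: (y \in P1); case: (y \in P2); rewrite ?orbT.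
  rewrite Hadj // F orbF -(pe_rev (u :: P2 ++ [:: v])) zip_cyc !mem_cat /path_edge.
  set a1 := (_, _) \in zip (u :: _) _.
  set a2 := (y, x) \in zip (u :: _) _.
  set b1 := (x, y) \in _.
  set b2 := (y, x) \in _.
  by case: a1; case: a2; case: b1; case: b2.
Qed.


Lemma key1' P1 P2 P3 d w : tdata P1 P2 P3 -> d \in P1 -> w \in u :: P1 ++ [:: v] ->
  w != d -> anc d w -> False.
Proof.
move=> Ht Hd Hw Hne Hdw.
have Ht2 := tdata_132 Ht.
have Ht3 : tdata P2 P3 P1 by apply: tdata_132; apply: tdata_213.
have Ht21 := tdata_213 Ht.
have Ht31 := tdata_312 Ht.
have Hc2 := cycle_hole Ht.
have Hc3 := cycle_hole Ht2.
have Hc23 := cycle_hole Ht3.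
have Hw' : [|| w == u, w \in P1 | w == v].
  by move: Hw; rewrite !inE mem_cat inE.
have srcs : forall Q, is_hole S U (u :: P1 ++ v :: rev Q) ->
    forall z, hole_source c S (u :: P1 ++ v :: rev Q) z -> z \in u :: P1 ++ [:: v].
  move=> Q Hc z Hz.
  have HdC : d \in u :: P1 ++ v :: rev Q by rewrite memC Hd orbT.
  have HwC : w \in u :: P1 ++ v :: rev Q.
    by rewrite memC; case/or3P: Hw' => ->; rewrite ?orbT.
  have [[Ad Bd _ _ _] _ _ _ _] := pivot_struct Hc HdC HwC Hne Hdw.
  case: (sources_pivot Hc HdC HwC Hne Hdw Hz) => ->.
    by apply: (nbr1 Ht Hd); rewrite uadj_sym; apply: arc_uadj.
  by apply: (nbr1 Ht Hd); rewrite uadj_sym; apply: arc_uadj.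
have S2 := srcs _ Hc2.
have S3 := srcs _ Hc3.
have Huv : forall z, hole_source c S (u :: P2 ++ v :: rev P3) z -> z = u \/ z = v.
  move=> z [HzC Hzs].
  move: (HzC); rewrite memC => /or4P [/eqP ->|Hz2|/eqP ->|Hz3]; try by [left|right].
  - have : hole_source c S (u :: P1 ++ v :: rev P2) z.
      split; first by rewrite memC Hz2 !orbT.
      move=> y Hy; apply/negP => Hyz.
      have Hy2 := nbr1 Ht21 Hz2 (etrans (uadj_sym _ _) (arc_uadj Hyz)).
      have : y \in u :: P2 ++ v :: rev P3.
        by move: Hy2; rewrite memC !inE mem_cat inE; case/or3P => ->; rewrite ?orbT.
      by move/Hzs; rewrite Hyz.
    move/S2; move: (td_disj1 Ht21 Hz2); rewrite !inE !mem_cat !inE => /negbT H1 H2.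
    exfalso; apply: (negP H1); move: H2.
    by case: (z == u); case: (z == v); case: (z \in P1); rewrite ?orbT.
  - have : hole_source c S (u :: P1 ++ v :: rev P3) z.
      split; first by rewrite memC Hz3 !orbT.
      move=> y Hy; apply/negP => Hyz.
      have Hy3 := nbr1 Ht31 Hz3 (etrans (uadj_sym _ _) (arc_uadj Hyz)).
      have : y \in u :: P2 ++ v :: rev P3.
        by move: Hy3; rewrite memC !inE mem_cat inE; case/or3P => ->; rewrite ?orbT.
      by move/Hzs; rewrite Hyz.
    move/S3; move: (td_disj1 Ht31 Hz3); rewrite !inE !mem_cat !inE => /negbT H1 H2.
    exfalso; apply: (negP H1); move: H2.
    by case: (z == u); case: (z == v); case: (z \in P1); rewrite ?orbT.
have [d' [w' [Hd' Hw'' Hne' Hdw']]] := exists_pivot Hc23.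
have [[Ad Bd _ _ Hab] _ _ [Sa Sb] _] := pivot_struct Hc23 Hd' Hw'' Hne' Hdw'.
have Ua := etrans (uadj_sym _ _) (arc_uadj Ad).
have Ub := etrans (uadj_sym _ _) (arc_uadj Bd).
case: (Huv _ Sa) => Ea; case: (Huv _ Sb) => Eb; rewrite Ea Eb in Ua Ub Hab.
- by move: Hab; rewrite eqxx.
- exact: (noc Ht Ua Ub).
- exact: (noc Ht Ub Ua).
- by move: Hab; rewrite eqxx.
Qed.

Lemma key P1 P2 P3 s d w : tdata P1 P2 P3 -> is_hole S U s -> d \in s -> w \in s ->
  w != d -> anc d w -> d \in P1 -> False.
Proof.
move=> Ht Hh Hd Hw Hne Hdw HdP.
have [[Ad Bd Aa Ab Hab] [A2 Ak N2 Nk] _ _ _] := pivot_struct Hh Hd Hw Hne Hdw.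
have Ua := nbr1 Ht HdP (etrans (uadj_sym _ _) (arc_uadj Ad)).
have Ub := nbr1 Ht HdP (etrans (uadj_sym _ _) (arc_uadj Bd)).
case Ha1: (gf s d 1 \in P1).
  have He := nbr1 Ht Ha1 (arc_uadj Aa).
  exact: (key1' Ht HdP He N2 A2).
case Hb1: (gf s d (size s - 1) \in P1).
  have He := nbr1 Ht Hb1 (arc_uadj Ab).
  exact: (key1' Ht HdP He Nk Ak).
have Uda := etrans (uadj_sym _ _) (arc_uadj Ad).
have Udb := etrans (uadj_sym _ _) (arc_uadj Bd).
have Hq : forall z, z \in u :: P1 ++ [:: v] -> z \in P1 = false -> z = u \/ z = v.
  move=> z; rewrite !inE mem_cat inE => H H'; rewrite H' /= in H.
  by case/orP: H => /eqP ->; [left|right].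
case: (Hq _ Ua Ha1) => Ea; case: (Hq _ Ub Hb1) => Eb; rewrite Ea Eb in Uda Udb Hab.
- by move: Hab; rewrite eqxx.
- exact: (noc Ht Uda Udb).
- exact: (noc Ht Udb Uda).
- by move: Hab; rewrite eqxx.
Qed.

Lemma final s d w x : is_hole S U s -> d \in s -> w \in s -> w != d -> anc d w -> x != d ->
  is_pivot p c S s d /\ ~ is_pivot p c S s x.
Proof.
move=> Hh Hd Hw Hne Hdw Hxd.
have [[Ad Bd _ _ Hab] _ Hsink [Sa Sb] [Hall _]] := pivot_struct Hh Hd Hw Hne Hdw.
have [_ Gin _ _ _] := gf_props Hh Hd.
split.
- split => //.
    move=> a' Ha'; case: (sources_pivot Hh Hd Hw Hne Hdw Ha') => ->.
      by rewrite uadj_sym; apply: arc_uadj.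
    by rewrite uadj_sym; apply: arc_uadj.
  move=> y Hy Hns; apply: Hall => //; apply/eqP => E; apply: Hns; by rewrite E.
- case=> [[Hx Hxs] _ Hxanc].
  have H1 : anc d x.
    apply: Hall => //; apply/eqP => E.
      by move: (Hxs d Hd); rewrite E Ad.
    by move: (Hxs d Hd); rewrite E Bd.
  have H2 : anc x d.
    apply: Hxanc => // -[_ Hds].
    by move: (Hds _ (Gin 1)); rewrite Ad.
  by move: Hxd; rewrite (anc_antisym H1 H2) eqxx.
Qed.

Lemma main_in P1 P2 P3 s : tdata P1 P2 P3 -> is_hole S U s ->
    (is_pivot p c S s u /\ ~ is_pivot p c S s v) \/
    (is_pivot p c S s v /\ ~ is_pivot p c S s u).
Proof.
move=> Ht Hh.
have [d [w [Hd Hw Hne Hdw]]] := exists_pivot Hh.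
have [_ Hu _ _] := Ht.
have Huv : u != v by move: Hu; rewrite /= inE negb_or => /andP [/andP [H _] _].
have [_ _ Hsub _] := Hh.
have : d \in S by apply: Hsub.
rewrite (td_mem _ Ht) !inE !mem_cat.
case/orP => [/eqP Edu|]; first by left; rewrite -Edu; apply: (final Hh Hd Hw Hne Hdw); rewrite Edu eq_sym.
case/orP => [/eqP Edv|]; first by right; rewrite -Edv; apply: (final Hh Hd Hw Hne Hdw); rewrite Edv.
case/or3P => HdP; exfalso.
- exact: (key Ht Hh Hd Hw Hne Hdw HdP).
- exact: (key (tdata_213 Ht) Hh Hd Hw Hne Hdw HdP).
- exact: (key (tdata_312 Ht) Hh Hd Hw Hne Hdw HdP).
Qed.

End Tree.

Theorem lemma6p4 (V : finType) (r : V) (p : V -> V) (l : V -> V)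
    (c : V -> {set V}) (S : {set V}) (u v : V) :
  is_burling_tree r p l c ->
  is_long_theta S (uadj c S) u v ->
  forall s : seq V, is_hole S (uadj c S) s ->
    (is_pivot p c S s u /\ ~ is_pivot p c S s v) \/
    (is_pivot p c S s v /\ ~ is_pivot p c S s u).
Proof.
move=> HB [P1 [P2 [P3 Ht]]] s Hh.
exact: (main_in HB Ht Hh).
Qed.
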